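(* Let $G$ be an $(n,d,\beta)$ expander with girth $g$, endowed with its shortest path metric $c$, and let $r$ be a root vertex. Let $P=\{p_v: v\in V\}$ be a collection of paths in $G$, $p_v$ from $v$ to $r$, and let $F$ be the set of first edges $(v,v_1)$ of the paths $p_v$. Let $q=(u_1,\ldots,u_t)$ be a walk in $G$ with $t=g/3$ which is good, i.e. at most $t/8$ of its edges $(u_i,u_{i+1})$ lie in $F$ and it contains at least $t/2$ distinct vertices. Let $X$ be the set of distinct vertices of $q$. Then $c(P[X]) = \Omega(|X|\, g)$.
   Context: An $(n,d,\beta)$ expander is a $d$-regular graph on $n$ vertices whose adjacency matrix has second largest eigenvalue $\beta<1$. The girth is the length of a shortest cycle. $c(P[X]) := c(\bigcup_{v\in X}E(p_v))$, the total cost of the union of the edges of the paths $p_v$, $v\in X$; in the shortest path metric each graph edge has cost $1$. The $\Omega$ hides an absolute constant. *)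

(* Defs.v *)
From HB Require Import structures.
From mathcomp Require Import all_boot all_order all_algebra.
From mathcomp Require Import reals.
Set Implicit Arguments. Unset Strict Implicit. Unset Printing Implicit Defensive.
Import Order.TTheory GRing.Theory Num.Theory.
Local Open Scope ring_scope.

Definition simple_graph n (e : rel 'I_n) : Prop :=
  symmetric e /\ irreflexive e.

Definition regular n (e : rel 'I_n) (d : nat) : Prop :=
  forall v : 'I_n, #|[set w | e v w]| = d.

Definition adjmx (R : realType) n (e : rel 'I_n) : 'M[R]_n :=
  \matrix_(i, j) ((e i j)%:R : R).

Definition nadjmx (R : realType) n (e : rel 'I_n) (d : nat) : 'M[R]_n :=
  (d%:R)^-1 *: adjmx R e.

(* beta is the second largest eigenvalue (with multiplicity) of the
   normalized adjacency matrix: the characteristic polynomial splits as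
   prod (X - s_i) with s sorted non-increasingly, and beta = s_1. *)
Definition second_eigenvalue (R : realType) n (M : 'M[R]_n) (beta : R) : Prop :=
  exists s : seq R,
    [/\ sorted (fun x y => y <= x) s,
        char_poly M = \prod_(x <- s) ('X - x%:P) &
        nth 0 s 1 = beta].

Definition expander (R : realType) n (e : rel 'I_n) (d : nat) (beta : R) : Prop :=
  [/\ simple_graph e, regular e d,
      second_eigenvalue (nadjmx R e d) beta & beta < 1].

Definition is_cycle n (e : rel 'I_n) (s : seq 'I_n) : bool :=
  [&& uniq s, (3 <= size s)%N & cycle e s].

Definition girth n (e : rel 'I_n) (g : nat) : Prop :=
  (exists s, is_cycle e s /\ size s = g) /\
  (forall s, is_cycle e s -> (g <= size s)%N).

(* A path from v to r: the vertex sequence v :: s, simple, consecutive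
   vertices adjacent, ending at r.  P v is the tail s of p_v. *)
Definition is_path_to n (e : rel 'I_n) (v r : 'I_n) (s : seq 'I_n) : bool :=
  [&& path e v s, uniq (v :: s) & last v s == r].

Definition seq_edges n (w : seq 'I_n) : seq {set 'I_n} :=
  [seq [set xy.1; xy.2] | xy <- zip w (behead w)].

Definition path_edges n (P : 'I_n -> seq 'I_n) (v : 'I_n) : {set {set 'I_n}} :=
  [set E in seq_edges (v :: P v)].

Definition cost_union n (P : 'I_n -> seq 'I_n) (X : {set 'I_n}) : nat :=
  #|\bigcup_(v in X) path_edges P v|.

Definition first_edges n (P : 'I_n -> seq 'I_n) : {set {set 'I_n}} :=
  [set E | [exists v : 'I_n,
     if P v is v1 :: _ then E == [set v; v1] else false]].

Definition is_walk n (e : rel 'I_n) (q : seq 'I_n) : bool :=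
  if q is x :: s then path e x s else true.

Definition edges_in n (q : seq 'I_n) (F : {set {set 'I_n}}) : nat :=
  count (fun E => E \in F) (seq_edges q).

Definition good_walk n (P : 'I_n -> seq 'I_n) (t : nat) (q : seq 'I_n) : Prop :=
  (8 * edges_in q (first_edges P) <= t)%N /\ (t <= 2 * #|[set x in q]|)%N.

(* Main.v *)
Require Import Defs.
From HB Require Import structures.
From mathcomp Require Import all_boot all_order all_algebra.
From mathcomp Require Import reals.
From mathcomp Require Import zify.
Import Order.TTheory GRing.Theory Num.Theory.
Set Implicit Arguments. Unset Strict Implicit. Unset Printing Implicit Defensive.

Lemma se_cons2 n (x y : 'I_n) s : seq_edges (x :: y :: s) = [set x; y] :: seq_edges (y :: s).
Proof. by []. Qed.
Lemma se_one n (x : 'I_n) : seq_edges [:: x] = [::].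
Proof. by []. Qed.

Lemma se_cat n (x : 'I_n) s1 s2 :
  seq_edges (x :: s1 ++ s2) = seq_edges (x :: s1) ++ seq_edges (last x s1 :: s2).
Proof.
elim: s1 x => [|y s1 IH] x //=.
by rewrite !se_cons2 IH.
Qed.

Lemma se_suffix n (s1 s2 : seq 'I_n) : {subset seq_edges s2 <= seq_edges (s1 ++ s2)}.
Proof.
elim: s1 => [|a s1 IH] //= E HE.
case: s1 IH => [|b s1] IH /=.
  case: s2 HE IH => [|c s2] //= HE IH.
  by rewrite se_cons2 inE HE orbT.
by rewrite se_cons2 inE IH ?orbT.
Qed.

Lemma se_mem n (w : seq 'I_n) E z : E \in seq_edges w -> z \in E -> z \in w.
Proof.
elim: w => [|a w IH] //.
case: w IH => [|b w] IH //.
rewrite se_cons2 inE => /orP [/eqP -> | H] Hz.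
  by move: Hz; rewrite !inE => /orP [->|->]; rewrite ?orbT.
by rewrite inE IH ?orbT.
Qed.

Lemma se_nth n (w : seq 'I_n) d i : i.+1 < size w ->
  [set nth d w i; nth d w i.+1] \in seq_edges w.
Proof.
elim: w i => [|a w IH] i //.
case: w IH => [|b w] IH //= Hi.
rewrite se_cons2 inE.
case: i Hi => [|i] Hi /=; first by rewrite eqxx.
by rewrite IH ?orbT.
Qed.

Lemma se_rcons n (x : 'I_n) s y :
  seq_edges (rcons (x :: s) y) = rcons (seq_edges (x :: s)) [set last x s; y].
Proof.
by rewrite rcons_cons -cats1 se_cat cats1 /=.
Qed.

Lemma se_rev n (w : seq 'I_n) : seq_edges (rev w) =i seq_edges w.
Proof.
elim: w => [|a w IH] //.
case: w IH => [|b w] IH //.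
rewrite rev_cons.
case E: (rev (b :: w)) => [|c s']; first by move: E; rewrite rev_cons; case: (rev w).
have Hl : last c s' = b.
  by rewrite -[last c s']/(last a (c :: s')) -E -[b :: w]revK rev_cons revK last_rcons.
move=> E0; rewrite se_rcons Hl se_cons2 mem_rcons !inE -E IH.
by rewrite setUC.
Qed.

Lemma path_cat_suffix n (e : rel 'I_n) y (l1 l2 : seq 'I_n) x :
  path e y (l1 ++ x :: l2) -> path e x l2.
Proof. by rewrite cat_path => /andP [_] /= /andP [_]. Qed.

Lemma split_ex (T : eqType) (x : T) s : x \in s -> exists s1 s2, s = s1 ++ x :: s2.
Proof. by case/splitPr => s1 s2; exists s1, s2. Qed.

Lemma shorten_ex n (e : rel 'I_n) (x : 'I_n) p : path e x p ->
  exists p', [/\ path e x p', uniq (x :: p'), last x p' = last x p,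
     size p' <= size p & {subset seq_edges (x :: p') <= seq_edges (x :: p)}].
Proof.
elim: p x => [|y p0 IH] x.
  by move=> _; exists [::]; split.
rewrite /= => /andP [exy Hp].
have [p0' [H1 H2 H3 H4 H5]] := IH y Hp.
case Hx: (x \in y :: p0').
  have [l1 [l2 Hw]] := split_ex Hx.
  have Hpw : path e x l2.
    case: l1 Hw => [|a l1] /= Hw.
      by case: Hw => Hy Hp'; rewrite -Hp' -Hy.
    case: Hw => Ha Hw; apply: (path_cat_suffix (y:=y) (l1:=l1)); by rewrite -Hw.
  exists l2; split => //.
  - move: H2; rewrite Hw cat_uniq => /and3P [_ _]; by [].
  - by rewrite /= -H3 -[last y p0']/(last x (y :: p0')) Hw last_cat.
  - have : size (y :: p0') = size (l1 ++ x :: l2) by rewrite Hw.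
    rewrite size_cat /= => Hs; lia.
  - move=> E HE.
    have : E \in seq_edges (y :: p0') by rewrite Hw; apply: se_suffix.
    move/H5; rewrite se_cons2 inE => ->; by rewrite orbT.
exists (y :: p0'); split => //=.
- by rewrite exy H1.
- by rewrite Hx.
- move=> E; rewrite !se_cons2 !inE => /orP [->//|/H5 ->]; by rewrite orbT.
Qed.

Definition nbw n (w : seq 'I_n) := forall d i, i.+2 < size w -> nth d w i != nth d w i.+2.

Lemma cyc_ex n (e : rel 'I_n) (c : seq 'I_n) : irreflexive e ->
  is_walk e c -> ~~ uniq c -> nbw c -> exists s, is_cycle e s /\ size s < size c.
Proof.
move=> irr; elim: c => [|x c IH] //= Hw Hu Hnb.
have Hw' : is_walk e c by case: c {IH Hu Hnb} Hw => //= y c /andP [].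
have Hnb' : nbw c by move=> d i Hi; apply: (Hnb d i.+1).
case Huc: (uniq c); last first.
  have [s [Hs1 Hs2]] := IH Hw' (negbT Huc) Hnb'.
  by exists s; split => //; apply: ltn_trans Hs2 _.
have Hxc : x \in c by move: Hu; rewrite Huc andbT negbK.
have [l1 [l2 Hc]] := split_ex Hxc.
exists (x :: l1); split; last by rewrite Hc size_cat /=; lia.
move: Hw Huc; rewrite Hc => Hw Huc.
apply/and3P; split.
- move: Huc; rewrite cat_uniq /= => /and3P [U1 /norP [Hxl _] _].
  by rewrite Hxl U1 andbT.
- case: l1 Hc Hw Huc => [|a [|b l1]] Hc Hw Huc.
  + by move: Hw => /= /andP []; rewrite irr.
  + have := Hnb x 0; rewrite Hc /= eqxx => H; by have := H isT.
  + by [].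
- move: Hw; rewrite /= cat_path => /andP [H1 /= /andP [H2 _]].
  by rewrite rcons_path H1 H2.
Qed.

Lemma nb_theta n (x a1 b1 : 'I_n) pa pb : uniq (x :: a1 :: pa) -> uniq (x :: b1 :: pb) ->
  a1 != b1 -> nbw (rev (a1 :: pa) ++ x :: b1 :: pb).
Proof.
move=> Ua Ub Hab d i; set A := a1 :: pa; set B := [:: x, b1 & pb].
rewrite size_cat size_rev => Hi.
have UA : uniq A by case/andP: Ua.
have xA : x \notin A by case/andP: Ua.
have UB : uniq B by [].
have kA : 0 < size A by [].
have hA : A = a1 :: pa by [].
have hB : B = [:: x, b1 & pb] by [].
clearbody A B.
rewrite !nth_cat size_rev.
case: ifP => C1; case: ifP => C2.
- rewrite !nth_rev; try (set k := size A; lia).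
  rewrite nth_uniq //; set k := size A; lia.
- rewrite nth_rev; last by set k := size A; lia.
  case: (ltnP i.+1 (size A)) => H1.
    have -> : i.+2 - size A = 0 by set k := size A; lia.
    apply/eqP; rewrite hB /= => E; move: xA; rewrite -E mem_nth //; set k := size A; lia.
  have -> : i.+2 - size A = 1 by set k := size A; lia.
  rewrite (_ : size A - i.+1 = 0) /=; last by set k := size A; lia.
  by rewrite hA hB.
- exfalso; set k := size A; lia.
- have -> : i.+2 - size A = (i - size A).+2 by set k := size A; lia.
  rewrite nth_uniq //; set k := size A; set k2 := size B; lia.
Qed.

Lemma rev_walk n (e : rel 'I_n) x p : symmetric e -> path e x p ->
  path e (last x p) (rev (belast x p)).
Proof.
move=> sym Hp; rewrite rev_path.
by rewrite (@eq_path _ _ e) // => a b; rewrite sym.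
Qed.

Lemma rev_cons_last (T : Type) (x : T) p : rev (x :: p) = last x p :: rev (belast x p).
Proof. by rewrite lastI rev_rcons. Qed.

Lemma last_rev_belast (T : Type) (x : T) p : last (last x p) (rev (belast x p)) = x.
Proof.
rewrite -[last (last x p) _]/(last x (last x p :: rev (belast x p))) -rev_cons_last.
by rewrite rev_cons last_rcons.
Qed.

Lemma fe n (e : rel 'I_n) (g : nat) (x a1 : 'I_n) pa pb :
  irreflexive e -> symmetric e ->
  (forall s, is_cycle e s -> g <= size s) ->
  path e x (a1 :: pa) -> uniq (x :: a1 :: pa) -> path e x pb ->
  last a1 pa = last x pb -> (size pa + size pb).+1 < g ->
  [set x; a1] \in seq_edges (x :: pb).
Proof.
move=> irr sym Hg Hpa Ua Hpb Hl Hs.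
have [pb' [P1 P2 P3 P4 P5]] := shorten_ex Hpb.
case: pb' P1 P2 P3 P4 P5 => [|b1 pb''] P1 P2 P3 P4 P5.
  exfalso; move: Ua P3; rewrite /= -Hl => Ua P3; move: Ua; rewrite P3 mem_last; by [].
case Hab: (b1 == a1).
  apply: P5; by rewrite se_cons2 inE (eqP Hab) eqxx.
exfalso.
set c := rev (a1 :: pa) ++ x :: b1 :: pb''.
have Hc : c = last x (a1 :: pa) :: (rev (belast x (a1 :: pa)) ++ b1 :: pb'').
  by rewrite /c -cat_rcons -rev_cons rev_cons_last.
have Wc : is_walk e c.
  rewrite Hc /= cat_path; apply/andP; split.
    by have := rev_walk sym Hpa.
  rewrite (last_rev_belast x (a1 :: pa)); by [].
have Uc : ~~ uniq c.
  rewrite /c cat_uniq; apply/negP => /and3P [_ /hasPn H _].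
  have := H (last a1 pa); rewrite mem_rev.
  have -> : last a1 pa \in x :: b1 :: pb'' by rewrite inE Hl -P3 /= mem_last orbT.
  by rewrite mem_last => /(_ isT).
have Nc : nbw c by apply: nb_theta; rewrite // eq_sym Hab.
have [s [Hs1 Hs2]] := cyc_ex irr Wc Uc Nc.
have := Hg _ Hs1.
move: Hs2; rewrite /c size_cat size_rev /= => Hs2 Hs3.
move: P4 => /= P4; lia.
Qed.

Lemma walk_suffix n (e : rel 'I_n) w1 x w2 : is_walk e (w1 ++ x :: w2) -> path e x w2.
Proof.
case: w1 => [|a w1] /=; first by [].
by move/path_cat_suffix.
Qed.

Lemma segf n (e : rel 'I_n) w1 x w2 y : is_walk e (w1 ++ x :: w2) -> y \in x :: w2 ->
  exists s, [/\ path e x s, last x s = y, size s <= size w2 &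
    {subset seq_edges (x :: s) <= seq_edges (w1 ++ x :: w2)}].
Proof.
move=> Hw Hy.
have Hp := walk_suffix Hw.
have [r1 [r2 Hr]] := split_ex Hy.
case: r1 Hr => [|a r1'] Hr.
  case: Hr => -> _; exists [::]; split => //= E; by rewrite se_one.
case: Hr => Ha Hr; subst a.
exists (r1' ++ [:: y]); split.
- move: Hp; rewrite Hr !cat_path => /andP [-> /= /andP [-> _]]; by [].
- by rewrite last_cat.
- by rewrite Hr !size_cat /=; lia.
- move=> E HE; apply: (se_suffix w1); rewrite Hr.
  move: HE; rewrite !se_cat !mem_cat => /orP [->//|] /=.
  by rewrite se_cons2 !inE => ->; rewrite orbT.
Qed.

Lemma seg n (e : rel 'I_n) q u v : symmetric e -> is_walk e q -> u \in q -> v \in q ->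
  exists s, [/\ path e u s, last u s = v, size s < size q &
    {subset seq_edges (u :: s) <= seq_edges q}].
Proof.
move=> sym Hq Hu Hv.
have [w1 [w2 Hw]] := split_ex Hu.
move: Hq Hv; rewrite Hw => Hq Hv.
case Hv2: (v \in u :: w2).
  have [s [S1 S2 S3 S4]] := segf Hq Hv2.
  exists s; split => //; rewrite size_cat /=; lia.
have Hv1 : v \in w1 by move: Hv; rewrite mem_cat Hv2 orbF.
have [z1 [z2 Hz]] := split_ex Hv1.
move: Hq; rewrite Hz -catA cat_cons => Hq.
have Hu2 : u \in v :: (z2 ++ u :: w2) by rewrite inE mem_cat inE eqxx !orbT.
have [s [S1 S2 S3 S4]] := segf Hq Hu2.
exists (rev (belast v s)); split.
- by rewrite -S2; apply: rev_walk.
- by rewrite -{1}S2 last_rev_belast.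
- rewrite size_rev size_belast size_cat /=; move: S3; rewrite size_cat /=; lia.
- move=> E; rewrite -S2 -rev_cons_last se_rev => /S4.
  by rewrite S2.
Qed.

Lemma last_take (T : Type) (x : T) s k : k <= size s -> last x (take k s) = nth x (x :: s) k.
Proof.
elim: s x k => [|y s IH] x k; first by case: k.
case: k => [|k] /=; first by [].
move=> Hk; rewrite IH //; by apply: set_nth_default.
Qed.

Definition inS n (P : 'I_n -> seq 'I_n) (q : seq 'I_n) u :=
  (u \in q) && (if P u is u1 :: _ then [set u; u1] \notin seq_edges q else false).

Lemma step2 n (e : rel 'I_n) g r (P : 'I_n -> seq 'I_n) q u v :
  irreflexive e -> symmetric e ->
  (forall s, is_cycle e s -> g <= size s) ->
  (forall v, is_path_to e v r (P v)) -> is_walk e q ->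
  inS P q u -> v \in q -> v != u -> v \in u :: P u ->
  index v (u :: P u) + size q <= g -> False.
Proof.
move=> irr sym Hg HP Hq /andP [Hu Su] Hv Hvu Hvp Hi.
case HPu: (P u) Su Hvp Hi => [|u1 pu] // Su Hvp Hi.
have := HP u; rewrite /is_path_to HPu => /and3P [Hpath Huniq _].
have [s [S1 S2 S3 S4]] := seg sym Hq Hu Hv.
have {Hvp} Hvp : v \in u1 :: pu by move: Hvp; rewrite inE (negbTE Hvu).
have {Hi} Hi : (index v (u1 :: pu)).+1 + size q <= g by move: Hi; rewrite /= eq_sym (negbTE Hvu).
have Hk : index v (u1 :: pu) <= size pu by move: Hvp; rewrite -index_mem.
set k := index v (u1 :: pu) in Hi Hk.
have Hlast : last u1 (take k pu) = v.
  by rewrite last_take // nth_index.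
have := @fe n e g u u1 (take k pu) s irr sym Hg.
have Hp1 : path e u (u1 :: take k pu).
  by have := take_path k.+1 Hpath.
have Hu1 : uniq [:: u, u1 & take k pu].
  by have := take_uniq k.+2 Huniq.
move=> /(_ Hp1 Hu1 S1).
rewrite Hlast S2 => /(_ erefl).
have Hsz : size (take k pu) <= k by rewrite size_take; case: ifP => //; lia.
move=> H; have := H ltac:(lia).
by move/S4; apply/negP.
Qed.

Lemma arith1 x1 x2 x3 q a b k g : x1 <= k -> x3 <= a -> x2 < q -> a + b + q <= g -> b = k.+1 ->
  (x1 + (x2 + x3)).+1 < g.
Proof. lia. Qed.

Lemma arith2 i a b q g : i <= a -> a + b + q <= g -> i + q <= g.
Proof. lia. Qed.

Lemma mainclaim n (e : rel 'I_n) g r (P : 'I_n -> seq 'I_n) q u v z :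
  irreflexive e -> symmetric e ->
  (forall s, is_cycle e s -> g <= size s) ->
  (forall v, is_path_to e v r (P v)) -> is_walk e q ->
  inS P q u -> inS P q v -> u != v ->
  z \in u :: P u -> z \in v :: P v ->
  index z (u :: P u) + index z (v :: P v) + size q <= g -> False.
Proof.
move=> irr sym Hg HP Hq Su Sv Huv Hzu Hzv Hi.
have Hu : u \in q by case/andP: Su.
have Hv : v \in q by case/andP: Sv.
set a := index z (u :: P u) in Hi.
set b := index z (v :: P v) in Hi.
case Hb: b => [|k].
  have Hzv' : z = v.
    by move: Hb; rewrite /b /= ; case: eqP => // ->.
  subst z.
  apply: (step2 irr sym Hg HP Hq Su Hv) => //; first by rewrite eq_sym.
  move: Hi; rewrite -/a; lia.
case/andP: Sv => _.
case HPv: (P v) => [|v1 pv] // Sv'.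
have := HP v; rewrite /is_path_to HPv => /and3P [Hpath Huniq _].
have Hvz : v != z by apply/negP => /eqP Evz; move: Hb; rewrite /b Evz /= eqxx.
have Hb' : b = (index z (v1 :: pv)).+1 by rewrite /b HPv /= (negbTE Hvz).
have Hzv1 : z \in v1 :: pv by move: Hzv; rewrite HPv inE eq_sym (negbTE Hvz).
have Hk : index z (v1 :: pv) <= size pv by move: Hzv1; rewrite -index_mem.
set k' := index z (v1 :: pv) in Hb' Hk.
have Hlast : last v1 (take k' pv) = z by rewrite last_take // nth_index.
have [s [S1 S2 S3 S4]] := seg sym Hq Hv Hu.
have Ha : a <= size (P u) by rewrite -ltnS; rewrite /a index_mem.
have Hp2 : path e v (s ++ take a (P u)).
  rewrite cat_path S1 S2 /=; apply: take_path.
  by have := HP u => /and3P [].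
have Hl2 : last v (s ++ take a (P u)) = z.
  by rewrite last_cat S2 last_take // nth_index.
have Hp1 : path e v (v1 :: take k' pv) by have := take_path k'.+1 Hpath.
have Hu1 : uniq [:: v, v1 & take k' pv] by have := take_uniq k'.+2 Huniq.
have Hsz1 : size (take k' pv) <= k' by rewrite size_take_min geq_minl.
have Hsz2 : size (take a (P u)) <= a by rewrite size_take_min geq_minl.
have := @fe n e g v v1 (take k' pv) (s ++ take a (P u)) irr sym Hg Hp1 Hu1 Hp2.
rewrite Hlast Hl2 size_cat => /(_ erefl).
have Hlt : (size (take k' pv) + (size s + size (take a (P u)))).+1 < g.
  exact: (arith1 Hsz1 Hsz2 S3 Hi Hb').
move=> H; have := H Hlt.
rewrite se_cat S2 mem_cat => /orP [/S4 HH|HH].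
  by move: Sv'; rewrite HH.
have Hvin : v \in u :: take a (P u) by apply: (se_mem HH); rewrite !inE eqxx.
have Hvin2 : v \in u :: P u.
  by move: Hvin; rewrite !inE => /orP [->//|/mem_take ->]; rewrite orbT.
have Hidx : index v (u :: P u) <= a.
  rewrite -ltnS; apply: index_ltn; by [].
apply: (step2 irr sym Hg HP Hq Su Hv) => //; first by rewrite eq_sym.
exact: (arith2 Hidx Hi).
Qed.

Lemma se_card n (w : seq 'I_n) E : E \in seq_edges w -> #|E| <= 2.
Proof. by case/mapP => xy _ ->; rewrite cards2; case: (_ != _). Qed.

Lemma cnt_EF n (q : seq 'I_n) (F : {set {set 'I_n}}) :
  #|[set E in seq_edges q | E \in F]| <= edges_in q F.
Proof.
rewrite /edges_in -size_filter; apply: leq_trans (card_size _).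
apply: subset_leq_card; apply/subsetP => E; rewrite inE mem_filter andbC; by [].
Qed.

Lemma card_bigcup_le2 n (A : {set {set 'I_n}}) :
  (forall E, E \in A -> #|E| <= 2) -> #|\bigcup_(E in A) E| <= 2 * #|A|.
Proof.
move=> H.
have H1 : #|\bigcup_(E in A) E| <= \sum_(E in A) #|E|.
  apply: (big_ind2 (fun (x : {set 'I_n}) y => #|x| <= y)) => //.
  - by rewrite cards0.
  - move=> x1 x2 y1 y2 h1 h2; rewrite cardsU; lia.
apply: leq_trans H1 _.
rewrite mulnC -sum_nat_const; apply: leq_sum => E; exact: H.
Qed.
Lemma arith3 i j t g : i < t.-1 -> j < t.-1 -> 3 * t <= g -> i + j + t <= g.
Proof. lia. Qed.
Lemma arith4 i j t g : i < t.-1 -> j <= t.-1 -> 3 * t <= g -> i + j + t <= g.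
Proof. lia. Qed.

Lemma arith5a (i j : nat) : i = j -> i.+1 = j -> i = j. Proof. by []. Qed.
Lemma arith5b (i j : nat) : i = j.+1 -> i.+1 = j -> i = j. Proof. lia. Qed.
Lemma arith5c (i j : nat) : i = j.+1 -> i.+1 = j.+1 -> i = j. Proof. lia. Qed.
Lemma arith5d (i j : nat) : i = j -> i.+1 = j.+1 -> i = j. Proof. by []. Qed.

Lemma counting n (e : rel 'I_n) g r (P : 'I_n -> seq 'I_n) q :
  irreflexive e -> symmetric e ->
  (forall s, is_cycle e s -> g <= size s) ->
  (forall v, is_path_to e v r (P v)) -> is_walk e q ->
  3 * size q <= g ->
  let S := [set u | inS P q u] in
  let Sh := [set u in S | size (P u) < (size q).-1] in
  #|Sh| <= 1 /\ #|S :\: Sh| * (size q).-1 <= cost_union P [set x in q].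
Proof.
move=> irr sym Hg HP Hq Hgq S Sh.
have Hlast : forall u, r \in u :: P u /\ index r (u :: P u) <= size (P u).
  move=> u; have := HP u => /and3P [_ _ /eqP <-]; split; first exact: mem_last.
  by rewrite -ltnS -[(size (P u)).+1]/(size (u :: P u)) index_mem mem_last.
split.
  apply/card_le1_eqP => u v; rewrite !inE => /andP [Su Hu] /andP [Sv Hv].
  apply/eqP/negPn/negP => Huv.
  have [r1 r2] := Hlast u; have [r3 r4] := Hlast v.
  rewrite eq_sym in Huv. apply: (mainclaim irr sym Hg HP Hq Su Sv Huv r1 r3).
  apply: arith3 Hgq; apply: leq_ltn_trans; eassumption.
set L := (size q).-1.
pose f := fun p : 'I_n * 'I_L => [set nth p.1 (p.1 :: P p.1) p.2; nth p.1 (p.1 :: P p.1) p.2.+1].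
set D := setX (S :\: Sh) [set: 'I_L].
have HD : forall v (i : 'I_L), (v, i) \in D -> inS P q v /\ i.+1 < size (v :: P v).
  move=> v i; rewrite !inE andbT => /andP [/negP Hsh Sv]; split => //.
  have := ltn_ord i; rewrite /= ltnS.
  case: (ltnP (size (P v)) L) => H1 H2.
    by exfalso; apply: Hsh; move: Sv => /= ->; rewrite H1.
  exact: leq_trans H2 H1.
have -> : #|S :\: Sh| * L = #|f @: D|.
  rewrite card_in_imset ?cardsX ?cardsT ?card_ord //.
  have Hun : forall v, uniq (v :: P v) by move=> v; have := HP v => /and3P [].
  have key : forall v w (i j : 'I_L), inS P q v -> inS P q w ->
      i.+1 < size (v :: P v) -> j.+1 < size (w :: P w) ->
      nth v (v :: P v) i \in [set nth w (w :: P w) j; nth w (w :: P w) j.+1] -> v = w.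
    move=> v w i j Sv Sw Hi Hj Hz.
    apply/eqP/negPn/negP => Hvw.
    set z := nth v (v :: P v) i in Hz.
    rewrite !inE in Hz.
    have Hiz : index z (v :: P v) = i by rewrite index_uniq // ltnW.
    have Hjz : index z (w :: P w) <= j.+1.
      move: Hz => /orP [] /eqP ->; rewrite index_uniq //; lia.
    have zv : z \in v :: P v by rewrite mem_nth // ltnW.
    have zw : z \in w :: P w.
      by move: Hz => /orP [] /eqP ->; rewrite mem_nth // ltnW.
    apply: (mainclaim irr sym Hg HP Hq Sv Sw Hvw zv zw).
    rewrite Hiz; apply: arith4 Hgq; [exact: ltn_ord | exact: leq_trans Hjz (ltn_ord j)].
  move=> [v i] [w j] /HD [Sv Hi] /HD [Sw Hj] Hf; rewrite /f /= in Hf.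
  have Hvw : v = w.
    apply: (key v w i j Sv Sw Hi Hj).
    by rewrite -Hf !inE eqxx.
  subst w.
  have h1 : nth v (v :: P v) i \in [set nth v (v :: P v) j; nth v (v :: P v) j.+1].
    by rewrite -Hf !inE eqxx.
  have h2 : nth v (v :: P v) i.+1 \in [set nth v (v :: P v) j; nth v (v :: P v) j.+1].
    by rewrite -Hf !inE eqxx orbT.
  have Hij : i = j :> nat.
    have U := Hun v.
    have Hi' : i < size (v :: P v) := ltnW Hi.
    have Hj' : j < size (v :: P v) := ltnW Hj.
    rewrite !inE in h1 h2.
    rewrite (nth_uniq v Hi' Hj' U) (nth_uniq v Hi' Hj U) in h1.
    rewrite (nth_uniq v Hi Hj' U) (nth_uniq v Hi Hj U) in h2.
    move: h1 h2 => /orP [] /eqP h1 /orP [] /eqP h2.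
    - exact: (arith5a h1 h2).
    - exact: (arith5d h1 h2).
    - exact: (arith5b h1 h2).
    - exact: (arith5c h1 h2).
  by congr (_, _); apply: val_inj.
apply: subset_leq_card; apply/subsetP => E /imsetP [[v i] /HD [Sv Hi] ->].
apply/bigcupP; exists v; first by rewrite inE; case/andP: Sv.
by rewrite /path_edges inE /f /=; apply: se_nth.
Qed.

Lemma bad_bound n r (P : 'I_n -> seq 'I_n) (e : rel 'I_n) q :
  (forall v, is_path_to e v r (P v)) ->
  #|[set x in q]| <= #|[set u | inS P q u]| + 1 + 2 * edges_in q (first_edges P).
Proof.
move=> HP.
set EF := [set E in seq_edges q | E \in first_edges P].
have Hsub : [set x in q] \subset [set u | inS P q u] :|: ([set r] :|: \bigcup_(E in EF) E).
  apply/subsetP => x; rewrite !inE => Hx.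
  case Sx: (inS P q x); first by [].
  move: Sx; rewrite /inS Hx /=.
  case HPx: (P x) => [|x1 px] H.
    have := HP x; rewrite /is_path_to HPx => /and3P [_ _ /eqP /= Hr]; by rewrite Hr eqxx.
  move: H => /negbFE H.
  apply/orP; right.
  apply/bigcupP; exists [set x; x1]; last by rewrite !inE eqxx.
  rewrite inE H /first_edges inE; apply/existsP; exists x; by rewrite HPx eqxx.
have H1 := subset_leq_card Hsub.
have H2 : #|\bigcup_(E in EF) E| <= 2 * #|EF|.
  apply: card_bigcup_le2 => E; rewrite inE => /andP [HE _]; exact: se_card HE.
have H3 := cnt_EF q (first_edges P).
set B := \bigcup_(E in EF) E in Hsub H2 H1.
have H4 : #|r |: B| <= 1 + #|B| by rewrite cardsU1; case: (_ \notin _).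
have H5 := (leq_card_setU [set u | inS P q u] (r |: B)).1.
apply: leq_trans H1 _; apply: leq_trans H5 _; rewrite -addnA leq_add2l.
apply: leq_trans H4 _; rewrite leq_add2l; apply: leq_trans H2 _.
by rewrite leq_mul2l H3 orbT.
Qed.
Lemma arith_final (x s s' h c t g E : nat) :
  h <= 1 -> s' = s - h -> s' * t.-1 <= c -> x <= s + 1 + 2 * E -> 8 * E <= t ->
  t <= 2 * x -> 3 * t <= g -> g < 3 * t + 3 -> 300 <= g -> x * g <= 100 * c.
Proof.
move=> H1 H2 H3 H4 H5 H6 H7 H8 H9.
have Hx : x <= 2 * s' + 4 by lia.
have Ht : 100 <= t by lia.
have Hs : 23 <= s' by lia.
have Htt : t.-1 = t - 1 by lia.
rewrite Htt in H3.
have A1 : x * g <= (2 * s' + 4) * (3 * t + 3).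
  apply: leq_mul; lia.
have A2 : (2 * s' + 4) * (3 * t + 3) <= 100 * (s' * (t - 1)).
  have : 23 * 100 <= s' * t by apply: leq_mul.
  nia.
apply: leq_trans A1 _; apply: leq_trans A2 _; by rewrite leq_mul2l H3 orbT.
Qed.

Local Open Scope ring_scope.

Theorem lemma7 :
  exists (C : rat) (g0 : nat), 0 < C /\
  forall (R : realType) (n d : nat) (beta : R) (e : rel 'I_n) (g : nat)
         (r : 'I_n) (P : 'I_n -> seq 'I_n) (q : seq 'I_n),
    expander e d beta ->
    girth e g ->
    (g0 <= g)%N ->
    (forall v, is_path_to e v r (P v)) ->
    is_walk e q ->
    size q = (g %/ 3)%N ->
    good_walk P (g %/ 3) q ->
    C * (#|[set x in q]| * g)%:R <= (cost_union P [set x in q])%:R.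
Proof.
have h0 : (0 : rat) < 100%:R by rewrite ltr0n.
exists (100%:R)^-1, 300%N; split; first by rewrite invr_gt0.
move=> R n d beta e g r P q [[sym irr] _ _ _] [_ Hg] Hg0 HP Hq Hsz [Hgd1 Hgd2].
have Hgq : (3 * size q <= g)%N by rewrite Hsz mulnC leq_trunc_div.
have Hgq2 : (g < 3 * size q + 3)%N.
  rewrite Hsz {1}(divn_eq g 3) mulnC ltn_add2l; by rewrite ltn_pmod.
have [C1 C2] := counting irr sym Hg HP Hq Hgq.
have C3 := bad_bound q HP.
set S := [set u | inS P q u] in C1 C2 C3.
set Sh := [set u in S | (size (P u) < (size q).-1)%N] in C1 C2.
have C4 : #|S :\: Sh| = (#|S| - #|S :&: Sh|)%N by rewrite cardsD.
have C5 : (#|S :&: Sh| <= 1)%N by apply: leq_trans C1; apply: subset_leq_card; apply: subsetIr.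
have Hnat : (#|[set x in q]| * g <= 100 * cost_union P [set x in q])%N.
  rewrite Hsz in Hgd1 Hgd2 Hgq Hgq2 C2.
  exact: (arith_final C5 C4 C2 C3 Hgd1 Hgd2 Hgq Hgq2 Hg0).
rewrite ler_pdivrMl; last exact: h0.
by rewrite -natrM ler_nat.
Qed.
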